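(* Let $\lambda_{\max}>1$ and let $F:[0,\lambda_{\max}]\to\mathbb{R}_+$ be continuously differentiable with $F(0)=0$, such that $F(x)<F^\star$ for all $x\in[0,1)$, $F'(1)>0$, $F''$ exists and is continuous on $(0,\lambda_{\max})$ with $F''(1)<0$, and $F$ is strongly concave. Then there exist $c>0$ and $\varepsilon_0>0$ (depending on $F$) such that for all $\varepsilon\in(0,\varepsilon_0]$, $$q^\star_{TA}(\varepsilon):=\inf\{\mathbb{E}_\pi[\bar q]:\lambda\in\Lambda_2,\ R(\lambda)\le\varepsilon\}\;\ge\; c\sqrt{\frac{\log(1/\varepsilon)}{\varepsilon}}.$$
   Context: For a policy $\lambda:\mathbb{Z}_+\to[0,\lambda_{\max}]$, consider the continuous-time birth–death chain on $\mathbb{Z}_+$ with rate $\lambda(q)$ from $q$ to $q+1$ and rate $1$ from $q$ to $q-1$ ($q\ge1$); when positive recurrent on the states reachable from $0$, $\pi$ is its stationary distribution and $\bar q\sim\pi$. $\Lambda_2$ is the class of two-arrival policies: $\lambda(q)=1+k_1$ for $0\le q<\tau$ and $\lambda(q)=1-k_2$ for $q\ge\tau$, with $\tau\in\mathbb{Z}_+$, $k_1\in(0,\lambda_{\max}-1]$, $k_2\in(0,1]$. $F^\star=\sup\{\mathbb{E}_\alpha[F(X)]:\alpha$ a probability measure on $[0,\lambda_{\max}]$, $X\sim\alpha$, $\mathbb{E}_\alpha[X]\le1\}$ and $R(\lambda)=F^\star-\mathbb{E}_\pi[F(\lambda(\bar q))]$. $F$ strongly concave means there is $a>0$ with $F(y)\le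 F(x)+F'(x)(y-x)-a(y-x)^2$ for all $x,y\in[0,\lambda_{\max}]$. *)

(* Defs.v *)
From HB Require Import structures.
From mathcomp Require Import all_boot all_order all_algebra.
From mathcomp Require Import all_classical all_reals all_analysis.
Set Implicit Arguments. Unset Strict Implicit. Unset Printing Implicit Defensive.
Import Order.TTheory GRing.Theory Num.Theory.
Import numFieldNormedType.Exports.
Local Open Scope classical_set_scope.
Local Open Scope ring_scope.

Definition two_arrival {R : realType} (tau : nat) (k1 k2 : R) : nat -> R :=
  fun q => if (q < tau)%N then 1 + k1 else 1 - k2.

Definition in_Lambda2 {R : realType} (lmax : R) (tau : nat) (k1 k2 : R) : Prop :=
  0 < k1 /\ k1 <= lmax - 1 /\ 0 < k2 /\ k2 <= 1.

(* pi is a stationary distribution of the continuous-time birth-death chain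
   with birth rate lam q (q -> q+1) and death rate 1 (q -> q-1, q >= 1):
   a probability distribution on nat solving the global balance equations
   pi Q = 0. *)
Definition stationary_dist {R : realType} (lam pi : nat -> R) : Prop :=
  (forall q, 0 <= pi q) /\
  (series pi @ \oo --> (1 : R)) /\
  (pi 1%N = pi 0%N * lam 0%N) /\
  (forall q : nat, (0 < q)%N ->
      pi q.-1 * lam q.-1 + pi q.+1 = pi q * (lam q + 1)).

(* A probability measure on [0,lmax] is represented as a (Borel) probability
   measure on R giving full mass to [0,lmax]. *)
Definition Fstar {R : realType} (lmax : R) (F : R -> R) : \bar R :=
  ereal_sup [set (\int[P]_(x in [set` `[0, lmax]%R]) (F x)%:E)%E
            | P in [set P : probability R R |
                      P [set` `[0, lmax]] = 1%E /\
                      (\int[P]_(x in [set` `[0, lmax]%R]) x%:E <= 1)%E]].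

(* Main.v *)
Require Import Defs.
From HB Require Import structures.
From mathcomp Require Import all_boot all_order all_algebra.
From mathcomp Require Import all_classical all_reals all_analysis.
From mathcomp Require Import lra ring.
Import Order.TTheory GRing.Theory Num.Theory.
Import numFieldNormedType.Exports.
Local Open Scope classical_set_scope.
Local Open Scope ring_scope.

Section Core.
Variable R : realType.

Lemma bernoulli_ineq (x : R) (n : nat) : 0 <= x -> x <= 1 ->
  1 - n%:R * x <= (1 - x) ^+ n.
Proof.
move=> x0 x1; elim: n => [|n IH]; first by rewrite expr0 mul0r subr0.
rewrite exprS -natr1.
have h0 : 0 <= 1 - x by lra.
have := ler_wpM2l h0 IH.
have : 0 <= n%:R :> R by [].
nra.
Qed.

Lemma sq_le {x y : R} : 0 <= x -> 0 <= y -> x ^+ 2 <= y ^+ 2 -> x <= y.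
Proof.
move=> x0 y0 h; rewrite leNgt; apply/negP => yx.
have : y ^+ 2 < x ^+ 2 by rewrite ltr_pXn2r // ?nnegrE.
lra.
Qed.

Lemma expR_ge_inv (t s : R) : expR s <= expR t -> s <= t.
Proof. by rewrite ler_expR. Qed.

Lemma caseA1 (U k2 p m : R) :
  0 <= U -> 0 < k2 -> k2 <= 1 -> 0 <= p -> p <= 1 / 2 -> k2 * U <= 1 ->
  (forall j : nat, j%:R * (1 - p) * (1 - k2) ^+ j <= m) ->
  U / 8 - 1 / 4 <= m.
Proof.
move=> U0 k20 k21 p0 p2 kU mj.
  set j := Num.trunc (U / 2).
  have /andP[jl ju] : j%:R <= U / 2 < j.+1%:R.
    by apply: truncn_itv; lra.
  have hj := mj j.
  have jk : j%:R * k2 <= 1 / 2.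
    have := ler_wpM2r (ltW k20) jl.
    have -> : U / 2 * k2 = (k2 * U) / 2 by field.
    lra.
  have b := @bernoulli_ineq k2 j (ltW k20) k21.
  have hb : 1 / 2 <= (1 - k2) ^+ j by lra.
  have j0 : 0 <= j%:R :> R by [].
  have pb : 1 / 4 <= (1 - p) * (1 - k2) ^+ j by nra.
  have : j%:R * (1 / 4) <= j%:R * ((1 - p) * (1 - k2) ^+ j) by rewrite ler_wpM2l.
  rewrite mulrA => hh.
  have : j%:R / 4 <= m by lra.
  have ju' : U / 2 < j%:R + 1 by move: ju; rewrite -[j.+1]addn1 natrD.
  move=> hm; lra.
Qed.


Lemma caseA2 (a d eps L U v : R) (tau : nat) (k1 k2 pi0 p T : R) :
  0 < a -> 0 < d -> 0 < eps -> 1 <= L -> 0 <= U -> eps * U ^+ 2 = L ->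
  v = expR (L / 4) -> eps * v ^+ 4 = 1 -> 2 * L <= d * v -> 2 <= v ->
  U <= L * v ^+ 2 ->
  0 < k1 -> 0 <= pi0 -> d * pi0 <= eps -> 0 <= p -> p <= 1 / 2 ->
  k1 * p = T - pi0 -> T = k2 * (1 - p) -> 1 < k2 * U -> a * k1 ^+ 2 * p <= eps ->
  T <= pi0 * expR (tau%:R * k1) ->
  a / 16 * U <= tau%:R.
Proof.
move=> a0 d0 e0 L1 U0 eU vE ev dv v2 UL k10 p00 dp p0 p2 k1p Tp kU ak1 Texp.
have v0 : 0 < v by lra.
have U0' : 0 < U.
  rewrite lt_neqAle U0 andbT; apply/eqP => U0e; move: kU; rewrite -U0e mulr0; lra.
have T2 : 1 <= 2 * T * U.
  have -> : 2 * T * U = k2 * U * (2 * (1 - p)) by rewrite Tp; ring.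
  nra.
set X := eps * v ^+ 2.
have X0 : 0 < X by rewrite /X mulr_gt0 // exprn_gt0.
have Xv : X * v ^+ 2 = 1.
  have v4 : v ^+ 4 = v ^+ 2 * v ^+ 2 by rewrite -exprD.
  by rewrite /X -mulrA -v4.
have eU4 : 4 * eps * U <= d.
  have h1 : eps * U <= eps * (L * v ^+ 2) by rewrite ler_wpM2l // ltW.
  have h2a : 2 * L * v <= d * v * v by rewrite ler_wpM2r // ltW.
  have h2b : 0 <= L * (v - 2) by rewrite mulr_ge0 //; lra.
  have h2 : 4 * L <= d * v ^+ 2 by rewrite expr2 mulrA; lra.
  have h3 : 4 * L * X <= d * v ^+ 2 * X by rewrite ler_wpM2r // ltW.
  have h4 : d * v ^+ 2 * X = d by rewrite -mulrA [v ^+ 2 * X]mulrC Xv mulr1.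
  have h5 : eps * (L * v ^+ 2) = L * X by rewrite /X; ring.
  lra.
have pi0T : 4 * pi0 * U <= 1.
  have h : 4 * U * (d * pi0) <= 4 * U * eps by rewrite ler_wpM2l //; lra.
  have h' : d * (4 * pi0 * U) <= d * 1 by lra.
  by rewrite ler_pM2l in h'.
have Tpi : 2 * pi0 <= T.
  have h : U * (2 * pi0) <= U * T by lra.
  by rewrite ler_pM2l in h.
have k1U : a * k1 <= 4 * U * eps.
  have h : a * k1 * (T - pi0) <= eps by rewrite -k1p; lra.
  have ak0 : 0 < a * k1 by rewrite mulr_gt0.
  have h2 : a * k1 * 1 <= a * k1 * (4 * U * (T - pi0)) by rewrite ler_pM2l //; lra.
  have h3 : a * k1 * (4 * U * (T - pi0)) = 4 * U * (a * k1 * (T - pi0)) by ring.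
  have h4 : 4 * U * (a * k1 * (T - pi0)) <= 4 * U * eps by rewrite ler_wpM2l //; lra.
  lra.
set E := expR (tau%:R * k1).
have E0 : 0 <= E by exact: expR_ge0.
have eT : v <= E.
  have h1 : d * T <= eps * E.
    have : d * T <= d * (pi0 * E) by rewrite ler_pM2l.
    have : d * pi0 * E <= eps * E by rewrite ler_wpM2r.
    rewrite mulrA; lra.
  have h2 : d <= 2 * U * (eps * E).
    have : d * 1 <= d * (2 * T * U) by rewrite ler_pM2l.
    have : 2 * U * (d * T) <= 2 * U * (eps * E) by rewrite ler_wpM2l //; lra.
    have -> : d * (2 * T * U) = 2 * U * (d * T) by ring.
    lra.
  have h3 : 2 * (U * (eps * v)) <= d.
    have h4 : U * (eps * v) <= L * v ^+ 2 * (eps * v).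
      by rewrite ler_wpM2r // ltW // mulr_gt0.
    have h5 : L * v ^+ 2 * (eps * v) = L * (X * v) by rewrite /X; ring.
    have h6 : 2 * L * (X * v) <= d * v * (X * v).
      rewrite ler_wpM2r //; first by rewrite mulr_ge0 ?ltW.
    have h7 : d * v * (X * v) = d.
      have -> : d * v * (X * v) = d * (X * v ^+ 2) by rewrite expr2; ring.
      by rewrite Xv mulr1.
    lra.
  have ue : 0 < 2 * U * eps by rewrite mulr_gt0 // mulr_gt0.
  have h8 : 2 * U * eps * v <= 2 * U * eps * E.
    have e1 : 2 * U * eps * v = 2 * (U * (eps * v)) by ring.
    have e2 : 2 * U * eps * E = 2 * U * (eps * E) by ring.
    lra.
  by rewrite ler_pM2l in h8.
have tk : L / 4 <= tau%:R * k1 by apply: expR_ge_inv; rewrite -vE.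
have t0 : 0 <= tau%:R :> R by [].
have h1 : a * (L / 4) <= a * (tau%:R * k1) by rewrite ler_pM2l.
have h2 : a * (tau%:R * k1) <= tau%:R * (4 * U * eps).
  rewrite mulrCA; exact: ler_wpM2l.
have ue : 0 < 4 * U * eps by rewrite mulr_gt0 // mulr_gt0.
have h3 : 4 * U * eps * (a / 16 * U) <= 4 * U * eps * tau%:R.
  have -> : 4 * U * eps * (a / 16 * U) = a * (L / 4) by rewrite -eU; field.
  lra.
by rewrite ler_pM2l in h3.
Qed.


Lemma caseB (a d eps L v : R) (tau : nat) (k1 pi0 p : R) :
  0 < a -> 0 < d -> 0 < eps -> 1 <= L ->
  v = expR (L / 4) -> eps * v ^+ 4 = 1 -> 2 * L <= d * v -> 2 <= v ->
  0 < k1 -> 0 <= pi0 -> d * pi0 <= eps -> 1 / 2 < p ->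
  a * k1 ^+ 2 * p <= eps ->
  (forall kap, k1 <= kap -> kap * p <= pi0 * expR (tau%:R * kap)) ->
  L * v ^+ 2 <= 4 * (1 + 2 / a) * tau%:R.
Proof.
move=> a0 d0 e0 L1 vE ev dv v2 k10 p00 dp p2 ak1 kapH.
have v0 : 0 < v by lra.
  have v20 : 0 < v ^+ 2 by rewrite exprn_gt0.
  have vn0 : v != 0 by rewrite gt_eqF.
  have an0 : a != 0 by rewrite gt_eqF.
  set t := 2 / a.
  have t0 : 0 < t by rewrite /t divr_gt0.
  have ta : t * a = 2 by rewrite /t divfK.
  have ie : eps = (v ^+ 4)^-1.
    by rewrite -{1}(mulfK (expf_neq0 4 vn0) eps) ev mul1r.
  set kap := (1 + t) / v ^+ 2.
  have kap0 : 0 < kap by rewrite /kap divr_gt0 //; lra.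
  have kapE : kap = (1 + t) * v ^+ 2 * eps.
    rewrite /kap ie; field; exact: vn0.
  have k1kap : k1 <= kap.
    apply: (sq_le (ltW k10) (ltW kap0)).
    have h1 : a * k1 ^+ 2 <= t * a * eps by rewrite ta; nra.
    have h2 : k1 ^+ 2 <= t * eps by nra.
    have -> : kap ^+ 2 = (1 + t) ^+ 2 * eps.
      rewrite /kap ie; field; exact: vn0.
    nra.
  have hk := kapH kap k1kap.
  have E0 : 0 <= expR (tau%:R * kap) by exact: expR_ge0.
  have ekap : v <= expR (tau%:R * kap).
    have h3a : d * (kap * p) <= d * (pi0 * expR (tau%:R * kap)) by rewrite ler_pM2l.
    have h3b : d * pi0 * expR (tau%:R * kap) <= eps * expR (tau%:R * kap) by rewrite ler_wpM2r.
    have h3c : d * kap / 2 <= d * (kap * p).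
      have dk : 0 < d * kap by rewrite mulr_gt0.
      nra.
    have h3 : d * kap / 2 <= eps * expR (tau%:R * kap).
      rewrite mulrA in h3a; lra.
    have h3' : d * ((1 + t) * v ^+ 2 * eps) / 2 <= eps * expR (tau%:R * kap) by rewrite -kapE.
    clear h3; rename h3' into h3.
    have h4 : d * (1 + t) * v ^+ 2 / 2 <= expR (tau%:R * kap) by nra.
    apply: (le_trans _ h4).
    have : 1 <= d * v / 2 by lra.
    have -> : d * (1 + t) * v ^+ 2 / 2 = v * (d * v / 2) * (1 + t) by rewrite expr2; field.
    have : 0 <= v * (d * v / 2) by nra.
    nra.
  have tk : L / 4 <= tau%:R * kap by apply: expR_ge_inv; rewrite -vE.
  have tk' : L / 4 <= tau%:R * ((1 + t) * v ^+ 2 * eps) by rewrite -kapE.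
  clear tk; rename tk' into tk.
  have h6 : L / 4 * v ^+ 4 <= tau%:R * ((1 + t) * v ^+ 2) * (eps * v ^+ 4).
    have := ler_wpM2r (exprn_ge0 4 (ltW v0)) tk.
    by rewrite -!mulrA.
  move: h6; rewrite ev mulr1 => h6.
  have v4 : v ^+ 4 = v ^+ 2 * v ^+ 2 by rewrite -exprD.
  rewrite v4 in h6.
  have : L * v ^+ 2 * v ^+ 2 <= 4 * (1 + t) * tau%:R * v ^+ 2 by lra.
  rewrite ler_pM2r //.
Qed.

Lemma core (a d eps L U v : R) (tau : nat) (k1 k2 pi0 p T m : R) :
  0 < a -> 0 < d -> 0 < eps -> 1 <= L -> 0 <= U -> eps * U ^+ 2 = L ->
  v = expR (L / 4) -> eps * v ^+ 4 = 1 -> 2 * L <= d * v -> 2 <= v ->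
  32 * (1 + a) <= a * v ->
  0 < k1 -> 0 < k2 -> k2 <= 1 -> 0 <= pi0 -> d * pi0 <= eps -> 0 <= p -> p <= 1 ->
  k1 * p = T - pi0 -> T = k2 * (1 - p) -> a * k1 ^+ 2 * p <= eps ->
  T <= pi0 * expR (tau%:R * k1) ->
  (forall kap, k1 <= kap -> kap * p <= pi0 * expR (tau%:R * kap)) ->
  (tau%:R - 1) / 4 <= m ->
  (forall j : nat, j%:R * (1 - p) * (1 - k2) ^+ j <= m) ->
  a / (128 * (1 + a)) * U <= m.
Proof.
move=> a0 d0 e0 L1 U0 eU vE ev dv v2 av k10 k20 k21 p00 dp p0 p1 k1p Tp ak1 Texp kapH mtau mj.
have v0 : 0 < v by lra.
have U2 : U ^+ 2 = L * v ^+ 4.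
  by rewrite -eU -mulrA mulrCA ev mulr1.
have vU : v ^+ 2 <= U.
  have hv0 : 0 <= v ^+ 2 by rewrite exprn_ge0 // ltW.
  apply: (sq_le hv0 U0).
  rewrite U2 -exprM.
  have : 0 <= v ^+ (2 * 2) by rewrite exprn_ge0 // ltW.
  nra.
have UL : U <= L * v ^+ 2.
  have hL0 : 0 <= L * v ^+ 2 by rewrite mulr_ge0 ?exprn_ge0 ?ltW //; lra.
  apply: (sq_le U0 hL0).
  rewrite U2 exprMn -exprM /=.
  by rewrite ler_pM2r ?exprn_gt0 // ler_peMl; lra.
have vv : v <= v ^+ 2 by rewrite expr2 ler_peMl //; lra.
have U4 : 4 <= U by rewrite expr2 in vU; nra.
set g := a / (16 * (1 + a)).
have g0 : 0 < g by rewrite /g divr_gt0 //; lra.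
have ga : g <= a / 16.
  rewrite /g ler_pdivrMr; last by lra.
  have -> : a / 16 * (16 * (1 + a)) = a * (1 + a) by field.
  nra.
have gv : 2 <= g * v.
  rewrite /g mulrAC ler_pdivlMr; lra.
have cg : a / (128 * (1 + a)) = g / 8.
  rewrite /g; field; lra.
rewrite cg.
have gU : 2 <= g * U.
  have : g * v <= g * U by rewrite ler_pM2l //; lra.
  lra.
have tauU : g * U <= tau%:R -> g / 8 * U <= m.
  move=> h; lra.
have g16 : g <= 1/16.
  rewrite /g ler_pdivrMr; last by lra.
  lra.
have c1 : g / 8 * U <= U / 128.
  have : g * U <= 1/16 * U by rewrite ler_wpM2r.
  lra.
have [p2|p2] := lerP p (1/2); last first.
  have hB := caseB _ _ _ _ _ _ _ _ _ a0 d0 e0 L1 vE ev dv v2 k10 p00 dp p2 ak1 kapH.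
  apply: tauU.
  have h5 : g * U <= g * (L * v ^+ 2) by rewrite ler_pM2l.
  apply: (le_trans h5).
  have : g * (4 * (1 + 2 / a)) <= 1.
    rewrite /g.
    have -> : a / (16 * (1 + a)) * (4 * (1 + 2 / a)) = (a + 2) / (4 * (1 + a)).
      have an0 : a != 0 by rewrite gt_eqF.
      have a1n0 : 1 + a != 0 by rewrite gt_eqF //; lra.
      by field; rewrite an0 a1n0.
    rewrite ler_pdivrMr; lra.
  have : 0 <= tau%:R :> R by [].
  have : g * (L * v ^+ 2) <= g * (4 * (1 + 2 / a) * tau%:R) by rewrite ler_pM2l.
  nra.
have [kU|kU] := lerP (k2 * U) 1.
  have := caseA1 _ _ _ _ U0 k20 k21 p0 p2 kU mj.
  lra.
have := caseA2 _ _ _ _ _ _ _ _ _ _ _ _ a0 d0 e0 L1 U0 eU vE ev dv v2 UL k10 p00 dp p0 p2 k1p Tp kU ak1 Texp.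
move=> h; apply: tauU.
have : g * U <= a / 16 * U by rewrite ler_wpM2r.
lra.
Qed.

End Core.

Section Chain.
Variable R : realType.

Lemma lim_ge (u : nat -> R) (l x : R) (N : nat) : u @ \oo --> l ->
  (forall M, (N <= M)%N -> x <= u M) -> x <= l.
Proof.
move=> ul H; apply: (ler_cvg_to (cvg_cst x) ul).
near=> M; apply: H; near: M; exact: nbhs_infty_ge.
Unshelve. all: by end_near.
Qed.

Lemma lim_le (u : nat -> R) (l x : R) (N : nat) : u @ \oo --> l ->
  (forall M, (N <= M)%N -> u M <= x) -> l <= x.
Proof.
move=> ul H; apply: (ler_cvg_to ul (cvg_cst x)).
near=> M; apply: H; near: M; exact: nbhs_infty_ge.
Unshelve. all: by end_near.
Qed.

Lemma lim_eq (u : nat -> R) (l x : R) (N : nat) : u @ \oo --> l ->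
  (forall M, (N <= M)%N -> u M = x) -> l = x.
Proof.
move=> ul H; apply/le_anti/andP; split.
  by apply: (lim_le _ _ _ N ul) => M /H ->.
by apply: (lim_ge _ _ _ N ul) => M /H ->.
Qed.

Variables (tau : nat) (k1 k2 : R) (pi : nat -> R).
Hypotheses (k10 : 0 < k1) (k20 : 0 < k2) (k21 : k2 <= 1).
Hypothesis hpi : stationary_dist (two_arrival tau k1 k2) pi.

Let lam := two_arrival tau k1 k2.
Definition S n := \sum_(0 <= q < n) pi q.

Lemma pi_ge0 q : 0 <= pi q.
Proof. by case: hpi. Qed.

Lemma S_cvg : S @ \oo --> (1 : R).
Proof.
case: hpi => _ [h _].
by move: h; rewrite seriesEnat.
Qed.

Lemma step q : pi q.+1 = pi q * lam q.
Proof.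
case: hpi => _ [_ [h0 hb]].
elim: q => [|q IH]; first exact: h0.
have := hb q.+1 isT; rewrite /= -IH /lam.
lra.
Qed.

Lemma SS n : S n.+1 = S n + pi n.
Proof. by rewrite /S big_nat_recr. Qed.

Lemma S_ge0 n : 0 <= S n.
Proof. by rewrite /S; apply: sumr_ge0 => i _; exact: pi_ge0. Qed.

Lemma S_mono n M : (n <= M)%N -> S n <= S M.
Proof.
elim: M => [|M IH]; first by rewrite leqn0 => /eqP ->.
rewrite leq_eqVlt => /orP[/eqP -> //|]; rewrite ltnS => /IH h.
rewrite SS; have := pi_ge0 M; lra.
Qed.

Lemma S_le1 n : S n <= 1.
Proof.
apply: (lim_ge _ _ _ n S_cvg) => M; exact: S_mono.
Qed.

Lemma low n : (n <= tau)%N -> k1 * S n = pi n - pi 0.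
Proof.
elim: n => [|n IH] h; first by rewrite /S big_geq // mulr0 subrr.
rewrite SS mulrDr IH ?(ltnW h) // step /lam /two_arrival h.
ring.
Qed.

Lemma pi_low n : (n <= tau)%N -> pi n = pi 0 * (1 + k1) ^+ n.
Proof.
elim: n => [|n IH] h; first by rewrite expr0 mulr1.
by rewrite step IH ?(ltnW h) // /lam /two_arrival h exprS; ring.
Qed.

Lemma high_fin n N : (tau <= n)%N -> (n <= N)%N -> k2 * (S N - S n) = pi n - pi N.
Proof.
move=> tn; elim: N => [|N IH].
  by rewrite leqn0 => /eqP ->; rewrite !subrr mulr0.
rewrite leq_eqVlt => /orP[/eqP <-|]; first by rewrite !subrr mulr0.
rewrite ltnS => nN.
rewrite SS step /lam /two_arrival.
have -> : (N < tau)%N = false by apply/negbTE; rewrite -leqNgt (leq_trans tn nN).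
have := IH nN; lra.
Qed.

Lemma pi_cvg0 : pi @ \oo --> (0 : R).
Proof.
case: hpi => _ [h _].
apply: cvg_series_cvg_0.
by apply/cvg_ex; exists 1.
Qed.

Lemma high n : (tau <= n)%N -> k2 * (1 - S n) = pi n.
Proof.
move=> tn.
have h : (fun N => k2 * (S N - S n) + pi N) @ \oo --> k2 * (1 - S n) + 0.
  apply: cvgD => //; last exact: pi_cvg0.
  apply: cvgMr; apply: cvgB => //; [exact: S_cvg | exact: cvg_cst].
rewrite addr0 in h.
apply: (lim_eq _ _ _ n h) => M nM.
rewrite high_fin //; ring.
Qed.

Lemma pi_high j : pi (tau + j) = pi tau * (1 - k2) ^+ j.
Proof.
elim: j => [|j IH]; first by rewrite addn0 expr0 mulr1.
rewrite addnS step IH /lam /two_arrival.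
have -> : (tau + j < tau)%N = false by apply/negbTE; rewrite -leqNgt leq_addr.
by rewrite exprS; ring.
Qed.

Lemma mean_lb m : series (fun q => q%:R * pi q) @ \oo --> m ->
  forall n, n%:R * (1 - S n) <= m.
Proof.
rewrite seriesEnat => hm n.
have h : (fun N => n%:R * (S N - S n)) @ \oo --> n%:R * (1 - S n).
  apply: cvgMr; apply: cvgB => //; [exact: S_cvg | exact: cvg_cst].
apply: (ler_cvg_to h hm).
near=> M.
have nM : (n <= M)%N by near: M; exact: nbhs_infty_ge.
rewrite /S (big_cat_nat (leq0n n) nM) /= addrC addrK.
rewrite (big_cat_nat (leq0n n) nM) /= mulr_sumr.
have h1 : 0 <= \sum_(0 <= i < n) i%:R * pi i.
  by apply: sumr_ge0 => i _; rewrite mulr_ge0 // pi_ge0.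
have h2 : \sum_(n <= i < M) n%:R * pi i <= \sum_(n <= i < M) i%:R * pi i.
  rewrite big_nat_cond [X in _ <= X]big_nat_cond.
  apply: ler_sum => i /andP[/andP[ni _] _].
  by rewrite ler_wpM2r ?pi_ge0 // ler_nat.
lra.
Unshelve. all: by end_near.
Qed.

Lemma powle {x y : R} {n : nat} : 0 <= x -> x <= y -> x ^+ n <= y ^+ n.
Proof. by move=> x0 xy; rewrite lerXn2r // nnegrE //; apply: le_trans xy. Qed.

Lemma pi_mono q n : (q + n <= tau)%N -> pi q <= pi (q + n).
Proof.
move=> h.
rewrite (pi_low q (leq_trans (leq_addr n q) h)) (pi_low _ h) exprD mulrA.
have r1 : 1 <= (1 + k1) ^+ n by apply: exprn_ege1; rewrite lerDl ltW.
have x0 : 0 <= pi 0 * (1 + k1) ^+ q by apply: mulr_ge0; [exact: pi_ge0 | apply: exprn_ge0; rewrite addr_ge0 // ltW].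
by rewrite ler_peMr.
Qed.

Lemma S_half : S (tau./2) <= 1 / 2.
Proof.
set n := tau./2.
have e : tau = (odd tau + (n + n))%N by rewrite addnn odd_double_half.
have h2 : (n + n <= tau)%N by rewrite {1}e leq_addl.
have hS : S (n + n) = S n + \sum_(0 <= q < n) pi (q + n).
  rewrite /S (big_cat_nat (leq0n n) (leq_addr n n)) /=.
  congr (_ + _); by rewrite -{1}[n]add0n big_addn addnK.
have h3 : S n <= \sum_(0 <= q < n) pi (q + n).
  rewrite /S big_nat_cond [X in _ <= X]big_nat_cond.
  apply: ler_sum => q /andP[/andP[_ qn] _]; apply: pi_mono.
  by apply: leq_trans h2; rewrite leq_add2r ltnW.
have := S_le1 (n + n).
lra.
Qed.

Lemma m_tau m : series (fun q => q%:R * pi q) @ \oo --> m ->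
  (tau%:R - 1) / 4 <= m.
Proof.
move=> hm.
have h := mean_lb _ hm (tau./2).
have hs := S_half.
have e : tau = (odd tau + (tau./2 + tau./2))%N by rewrite addnn odd_double_half.
have et : tau%:R <= 1 + (tau./2)%:R + (tau./2)%:R :> R.
  rewrite {1}e !natrD -addrA lerD2r.
  by case: (odd tau).
have : (tau./2)%:R * (1 / 2) <= (tau./2)%:R * (1 - S (tau./2)) by rewrite ler_wpM2l //; lra.
lra.
Qed.

Lemma m_j m : series (fun q => q%:R * pi q) @ \oo --> m ->
  forall j : nat, j%:R * (1 - S tau) * (1 - k2) ^+ j <= m.
Proof.
move=> hm j.
have h := mean_lb _ hm (tau + j).
have e1 : k2 * (1 - S (tau + j)) = k2 * ((1 - S tau) * (1 - k2) ^+ j).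
  by rewrite high ?leq_addr // pi_high -(high _ (leqnn tau)); ring.
have e2 : 1 - S (tau + j) = (1 - S tau) * (1 - k2) ^+ j.
  by apply: (mulfI (lt0r_neq0 k20)).
rewrite e2 in h.
have X0 : 0 <= (1 - S tau) * (1 - k2) ^+ j.
  by rewrite mulr_ge0 ?exprn_ge0 ?subr_ge0 ?S_le1.
have : j%:R * ((1 - S tau) * (1 - k2) ^+ j) <= (tau + j)%:R * ((1 - S tau) * (1 - k2) ^+ j).
  by rewrite ler_wpM2r // ler_nat leq_addl.
rewrite mulrA; lra.
Qed.

Lemma T_exp : pi tau <= pi 0 * expR (tau%:R * k1).
Proof.
rewrite pi_low // expRM_natl ler_wpM2l ?pi_ge0 //.
have h0 : 0 <= 1 + k1 by rewrite addr_ge0 // ltW.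
apply: (powle h0).
by exact: expR_ge1Dx.
Qed.

Lemma kap_bound kap : k1 <= kap -> kap * S tau <= pi 0 * expR (tau%:R * kap).
Proof.
move=> kk.
have gen : forall n, (n <= tau)%N -> kap * S n <= pi 0 * ((1 + kap) ^+ n - 1).
  elim=> [|n IH] h; first by rewrite /S big_geq // expr0 subrr !mulr0.
  rewrite SS mulrDr pi_low ?(ltnW h) //.
  have h1 := IH (ltnW h).
  have h0 : 0 <= 1 + k1 by rewrite addr_ge0 // ltW.
  have h01 : 1 + k1 <= 1 + kap by rewrite lerD2l.
  have h2 : (1 + k1) ^+ n <= (1 + kap) ^+ n by apply: powle.
  have h3 : kap * (pi 0 * (1 + k1) ^+ n) <= kap * (pi 0 * (1 + kap) ^+ n).
    have kap0 : 0 <= kap by apply: le_trans kk; exact: ltW.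
    by rewrite ler_wpM2l // ler_wpM2l // pi_ge0.
  have -> : pi 0 * ((1 + kap) ^+ n.+1 - 1) = pi 0 * ((1 + kap) ^+ n - 1) + kap * (pi 0 * (1 + kap) ^+ n).
    by rewrite exprS; ring.
  lra.
apply: (le_trans (gen tau (leqnn tau))).
rewrite ler_wpM2l ?pi_ge0 // expRM_natl.
have kap0 : 0 <= 1 + kap by rewrite addr_ge0 // (le_trans (ltW k10) kk).
have : (1 + kap) ^+ tau <= expR kap ^+ tau.
  by apply: (powle kap0); exact: expR_ge1Dx.
lra.
Qed.

Definition W n := \sum_(0 <= q < n) pi q * (lam q - 1) ^+ 2.

Lemma W_low n : (n <= tau)%N -> W n = k1 ^+ 2 * S n.
Proof.
elim: n => [|n IH] h; first by rewrite /W /S !big_geq // mulr0.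
rewrite /W big_nat_recr //= -/(W n) IH ?(ltnW h) // SS /lam /two_arrival h.
ring.
Qed.

Lemma W_mono n M : (n <= M)%N -> W n <= W M.
Proof.
elim: M => [|M IH]; first by rewrite leqn0 => /eqP ->.
rewrite leq_eqVlt => /orP[/eqP -> //|]; rewrite ltnS => /IH h.
have -> : W M.+1 = W M + pi M * (lam M - 1) ^+ 2 by rewrite /W big_nat_recr.
have : 0 <= pi M * (lam M - 1) ^+ 2 by rewrite mulr_ge0 ?pi_ge0 ?sqr_ge0.
lra.
Qed.

Lemma regret (lmax : R) (F dF : R -> R) (a rF : R) :
  0 <= a -> 1 + k1 <= lmax ->
  (forall y, 0 <= y <= lmax -> F y <= F 1 + dF 1 * (y - 1) - a * (y - 1) ^+ 2) ->
  series (fun q => pi q * F (two_arrival tau k1 k2 q)) @ \oo --> rF ->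
  dF 1 * pi 0 + a * (k1 ^+ 2 * S tau) <= F 1 - rF.
Proof.
move=> a0 hl conc hG; rewrite seriesEnat in hG.
have lam_in q : 0 <= lam q <= lmax.
  rewrite /lam /two_arrival; case: (q < tau)%N.
    apply/andP; split => //; rewrite addr_ge0 // ltW //.
  apply/andP; split; first by rewrite subr_ge0.
  have : 1 - k2 <= 1 by rewrite lerBlDr lerDl ltW.
  move=> h; apply: (le_trans h); apply: le_trans hl; rewrite lerDl ltW //.
have ind M : \sum_(0 <= q < M) pi q * F (lam q) <=
    F 1 * S M + dF 1 * (pi M - pi 0) - a * W M.
  elim: M => [|M IH].
    by rewrite /S /W !big_geq // subrr !mulr0 subr0 addr0.
  rewrite big_nat_recr //= SS /W big_nat_recr //= -/(W M) step.
  have hc := conc _ (lam_in M).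
  have : pi M * F (lam M) <= pi M * (F 1 + dF 1 * (lam M - 1) - a * (lam M - 1) ^+ 2).
    by rewrite ler_wpM2l ?pi_ge0.
  move=> h.
  have e : pi M * (F 1 + dF 1 * (lam M - 1) - a * (lam M - 1) ^+ 2) =
    F 1 * pi M + dF 1 * (pi M * lam M - pi M) - a * (pi M * (lam M - 1) ^+ 2) by ring.
  lra.
have hR : (fun M => F 1 * S M + dF 1 * (pi M - pi 0) - a * (k1 ^+ 2 * S tau)) @ \oo -->
    F 1 * 1 + dF 1 * (0 - pi 0) - a * (k1 ^+ 2 * S tau).
  apply: cvgB => //; last exact: cvg_cst.
  apply: cvgD => //; first by apply: cvgMr; exact: S_cvg.
  apply: cvgMr; apply: cvgB => //; [exact: pi_cvg0 | exact: cvg_cst].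
have hle : rF <= F 1 * 1 + dF 1 * (0 - pi 0) - a * (k1 ^+ 2 * S tau).
  apply: (ler_cvg_to hG hR); near=> M.
  have tM : (tau <= M)%N by near: M; exact: nbhs_infty_ge.
  have h1 := ind M.
  have h2 := ler_wpM2l a0 (W_mono _ _ tM).
  rewrite W_low // in h2.
  rewrite /=; move: h1 h2; rewrite /lam => h1 h2; lra.
lra.
Unshelve. all: by end_near.
Qed.

End Chain.

Lemma Fstar_ge1 (R : realType) (lmax : R) (F : R -> R) :
  1 <= lmax -> {within `[0, lmax], continuous F} ->
  ((F 1)%:E <= Fstar lmax F)%E.
Proof.
move=> l1 cF.
have mD : measurable [set` `[(0:R), lmax]] by exact: measurable_itv.
have D1 : [set` `[(0:R), lmax]] 1 by rewrite /= in_itv /= ler01 l1.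
apply: ereal_sup_ubound => /=.
exists (\d_(1:R) : probability R R).
  split.
    by rewrite /= /dirac indicE mem_set.
  rewrite (@integral_dirac _ _ (1:R) R _ mD) //.
  by rewrite /= /dirac indicE mem_set // mul1e.
rewrite (@integral_dirac _ _ (1:R) R _ mD).
  by rewrite /= /dirac indicE mem_set // mul1e.

apply: (proj2 (measurable_realfun.measurable_EFinP _ _)).
exact: measurable_realfun.subspace_continuous_measurable_fun.
Qed.

Theorem theorem6p2 (R : realType) (lmax : R) (F dF d2F : R -> R) :
  1 < lmax ->
  (* F : [0,lmax] -> R_+, continuously differentiable on [0,lmax] with
     derivative dF (one-sided at the endpoints via continuous extension) *)
  (forall x, 0 <= x <= lmax -> 0 <= F x) ->
  {within `[0, lmax], continuous F} ->
  (forall x, 0 < x < lmax -> is_derive x 1 F (dF x)) ->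
  {within `[0, lmax], continuous dF} ->
  F 0 = 0 ->
  (forall x, 0 <= x < 1 -> ((F x)%:E < Fstar lmax F)%E) ->
  0 < dF 1 ->
  (* F'' exists and is continuous on (0,lmax), F''(1) < 0 *)
  (forall x, 0 < x < lmax -> is_derive x 1 dF (d2F x)) ->
  {in `]0, lmax[, continuous d2F} ->
  d2F 1 < 0 ->
  (* strong concavity *)
  (exists a : R, 0 < a /\
     forall x y, 0 <= x <= lmax -> 0 <= y <= lmax ->
       F y <= F x + dF x * (y - x) - a * (y - x) ^+ 2) ->
  exists c : R, 0 < c /\ exists eps0 : R, 0 < eps0 /\
    forall eps : R, 0 < eps <= eps0 ->
    (* every feasible two-arrival policy has E_pi[q] >= c sqrt(log(1/eps)/eps),
       i.e. the infimum q*_TA(eps) is at least that bound *)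
    forall (tau : nat) (k1 k2 : R), in_Lambda2 lmax tau k1 k2 ->
    forall pi : nat -> R, stationary_dist (two_arrival tau k1 k2) pi ->
    forall rF : R,
      series (fun q => pi q * F (two_arrival tau k1 k2 q)) @ \oo --> rF ->
      (Fstar lmax F - rF%:E <= eps%:E)%E ->
    forall m : R,
      series (fun q => q%:R * pi q) @ \oo --> m ->
      c * Num.sqrt (ln (eps^-1) / eps) <= m.

Proof.
move=> hl Fpos cF dFd cdF F0 Fstr dF1 d2 cd2 d2n [a [a0 conc]].
set d := dF 1.
set L0 := 4 + 64 / d + 128 * (1 + a) / a.
exists (a / (128 * (1 + a))); split.
  by rewrite divr_gt0 //; lra.
exists (expR (- L0)); split; first exact: expR_gt0.
move=> eps /andP[e0 ee] tau k1 k2 [k10 [k1l [k20 k21]]] pi hpi rF hrF hreg m hm.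
have conc1 : forall y, 0 <= y <= lmax -> F y <= F 1 + d * (y - 1) - a * (y - 1) ^+ 2.
  move=> y hy; apply: conc => //; apply/andP; split; [exact: ler01 | exact: ltW].
have hreg1 : F 1 - rF <= eps.
  have h1 := Fstar_ge1 _ _ _ (ltW hl) cF.
  have h2 : ((F 1)%:E - rF%:E <= eps%:E)%E.
    apply: le_trans hreg; exact: leeB.
  by move: h2; rewrite -EFinB lee_fin.
have hk1l : 1 + k1 <= lmax by lra.
have hrg := @regret R tau k1 k2 pi k10 k20 k21 hpi lmax F dF a rF (ltW a0) hk1l conc1 hrF.
rewrite -/d in hrg.
have hSt0 := @S_ge0 R tau k1 k2 pi hpi tau.
have hSt1 := @S_le1 R tau k1 k2 pi hpi tau.
have hpi0 : 0 <= pi 0%N by case: hpi => h _; exact: h.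
have hk2S : 0 <= a * (k1 ^+ 2 * S R pi tau) by rewrite mulr_ge0 ?mulr_ge0 ?sqr_ge0 // ltW.
have dpi : d * pi 0%N <= eps by lra.
have dpi0 : 0 <= d * pi 0%N by rewrite mulr_ge0 // ltW.
have ak1 : a * k1 ^+ 2 * S R pi tau <= eps by rewrite -mulrA; lra.
set L := ln (eps^-1).
have einv0 : 0 < eps^-1 by rewrite invr_gt0.
have LL0 : L0 <= L.
  have : ln eps <= ln (expR (- L0)).
    by rewrite ler_ln // posrE expR_gt0.
  rewrite expRK /L lnV ?posrE //; lra.
have d0 : 0 < d by [].
have h64 : 0 <= 64 / d by apply: divr_ge0 => //; exact: ltW.
have h128 : 0 <= 128 * (1 + a) / a.
  apply: divr_ge0; last exact: ltW.
  apply: mulr_ge0 => //; apply: addr_ge0 => //; exact: ltW.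
have L1 : 1 <= L.
  rewrite /L0 in LL0; lra.
set U := Num.sqrt (L / eps).
have U0 : 0 <= U by exact: sqrtr_ge0.
have eU : eps * U ^+ 2 = L.
  rewrite /U sqr_sqrtr; last by rewrite divr_ge0 //; lra.
  by rewrite mulrC divfK // gt_eqF.
set v := expR (L / 4).
have ev : eps * v ^+ 4 = 1.
  rewrite /v -expRM_natl.
  have -> : 4%:R * (L / 4) = L :> R by field.
  rewrite /L lnK ?posrE // mulfV // gt_eqF //.
have vL : 1 + L / 4 <= v by exact: expR_ge1Dx.
have vL2 : 1 + (L / 4) ^+ 2 / 2 <= v.
  have := @expR_ge1Dxn R (L / 4) 1%N.
  have -> : ((1.+1)`!)%:R = 2 :> R by [].
  by apply; rewrite divr_ge0 //; lra.
have dL : 64 <= d * L.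
  have : 64 / d <= L by rewrite /L0 in LL0; lra.
  by rewrite ler_pdivrMr // mulrC.
have dv : 2 * L <= d * v.
  have h : d * (1 + (L / 4) ^+ 2 / 2) <= d * v by rewrite ler_pM2l.
  have : d * (1 + (L / 4) ^+ 2 / 2) = d + (d * L) * L / 32 by field.
  nra.
have v2 : 2 <= v by rewrite /L0 in LL0; lra.
have av : 32 * (1 + a) <= a * v.
  have : 128 * (1 + a) / a <= L by rewrite /L0 in LL0; lra.
  rewrite ler_pdivrMr // => h.
  have : a * (1 + L / 4) <= a * v by rewrite ler_pM2l.
  lra.
have k1p := @low R tau k1 k2 pi hpi tau (leqnn tau).
have Tp := @high R tau k1 k2 pi hpi tau (leqnn tau).
have Texp := @T_exp R tau k1 k2 pi k10 hpi.
have kapH := @kap_bound R tau k1 k2 pi k10 hpi.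
have mtau := @m_tau R tau k1 k2 pi k10 hpi m hm.
have mj := @m_j R tau k1 k2 pi k20 k21 hpi m hm.
apply: (@core R a d eps L U v tau k1 k2 (pi 0%N) (S R pi tau) (pi tau) m a0 d0 e0 L1 U0 eU erefl ev dv v2 av k10 k20 k21 hpi0 dpi hSt0 hSt1 k1p (esym Tp) ak1 Texp kapH mtau mj).
Qed.
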